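(* Assume the following statement holds: for every base $b>2$, every integer $n$ with $1<n<b$, and every symmetric $(n,b)$-palintiple with carries $c_k,\ldots,c_0$, one has $c_j\equiv 0 \pmod{n-1}$ for all $0\le j\le k$. Then, for integers $b>2$ and $1<n<b$, any two $(n,b)$-palintiples belong to the same class: either both are symmetric, or both are shifted-symmetric, or both are asymmetric.
   Context: Let $b>2$ be an integer base and write $(d_k,d_{k-1},\ldots,d_0)_b=\sum_{j=0}^k d_j b^j$ with $0\le d_j<b$. A natural number $p=(d_k,\ldots,d_0)_b$ with $d_k\neq 0$ and $d_0\neq 0$ that is not a base-$b$ palindrome is an $(n,b)$-palintiple if $(d_k,\ldots,d_0)_b=n\,(d_0,d_1,\ldots,d_k)_b$ for an integer $n$ with $1<n<b$. Its carries $c_0,\ldots,c_{k+1}$ are the carries arising in the base-$b$ multiplication of $(d_0,\ldots,d_k)_b$ by $n$: $c_0=0$ and $n d_{k-j}+c_j=d_j+b\,c_{j+1}$ for $0\le j\le k$ (so $c_{k+1}=0$). The palintiple is symmetric if $c_j=c_{k-j}$ for all $0\le j\le k$, shifted-symmetric if $c_j=c_{k-j+1}$ for all $0\le j\le k$, and asymmetric if it is neither symmetric nor shifted-symmetric. *)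

(* Defs.v *)
From mathcomp Require Import all_boot.
Set Implicit Arguments. Unset Strict Implicit. Unset Printing Implicit Defensive.

(* Base-b digits of p, little-endian: [:: d_0; d_1; ...; d_k],
   where k = trunc_log b p (so d_k <> 0 when p > 0). *)
Definition digits (b p : nat) : seq nat :=
  mkseq (fun j => (p %/ b ^ j) %% b) (trunc_log b p).+1.

Definition digval (b : nat) (d : seq nat) : nat :=
  \sum_(j < size d) nth 0 d j * b ^ j.

Definition topk (b p : nat) : nat := (size (digits b p)).-1.

Definition palintiple (n b p : nat) : Prop :=
  let d := digits b p in
  [/\ 0 < p, nth 0 d (topk b p) != 0, nth 0 d 0 != 0,
      rev d != d & p = n * digval b (rev d)].

(* carries of the multiplication of (d_0,...,d_k)_b by n:
   c_0 = 0, c_{j+1} = (n d_{k-j} + c_j) div b  (equivalently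
   n d_{k-j} + c_j = d_j + b c_{j+1} for a palintiple). *)
Fixpoint carry (n b p j : nat) : nat :=
  match j with
  | 0 => 0
  | j'.+1 => (n * nth 0 (digits b p) (topk b p - j') + carry n b p j') %/ b
  end.

Definition symmetric_pal (n b p : nat) : Prop :=
  forall j, j <= topk b p -> carry n b p j = carry n b p (topk b p - j).

Definition shifted_symmetric_pal (n b p : nat) : Prop :=
  forall j, j <= topk b p -> carry n b p j = carry n b p (topk b p - j + 1).

Definition asymmetric_pal (n b p : nat) : Prop :=
  ~ symmetric_pal n b p /\ ~ shifted_symmetric_pal n b p.

(* Main.v *)
Require Import Defs.
From Stdlib Require Import ZArith Lia Classical.
From mathcomp Require Import all_boot zify.

Lemma shiftA n b k (d c : nat -> nat) g s t :
  (forall j, j <= k -> n * d (k-j) + c j = d j + b * c j.+1) ->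
  (forall j, j <= k.+1 -> c j < n) -> c 0 = 0 -> c k.+1 = 0 ->
  n * n - 1 = g * s -> b - n = g * t -> n <= b -> 1 <= n -> n <= g ->
  forall j, j <= k -> c j = c (k - j + 1).
Proof.
move=> H Hc c0 ck Hs Ht Hnb Hn Hg.
have key: forall j, j <= k.+1 -> exists w : Z,
    (Z.of_nat (c j) - Z.of_nat (c (k.+1 - j)%nat) = Z.of_nat g * w)%Z.
  elim => [|j IH] Hj.
    exists 0%Z; rewrite subn0 c0 ck; lia.
  have Hjk : j <= k by [].
  have [w Hw] := IH (ltnW Hj).
  have E1 := H j Hjk.
  have E2 := H (k - j) (leq_subr _ _).
  rewrite subKn // in E2.
  have -> : k.+1 - j.+1 = k - j by [].
  have Hkj : k.+1 - j = (k - j).+1 by rewrite subSn.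
  rewrite Hkj in Hw.
  move: E1 E2 Hw.
  set y := d (k - j); set x := d j; set a := c j; set e := c j.+1;
  set e' := c (k - j); set a' := c (k - j).+1 => E1 E2 Hw.
  exists (Z.of_nat s * (Z.of_nat y - Z.of_nat e) - Z.of_nat t * (Z.of_nat a' + Z.of_nat n * Z.of_nat e) + Z.of_nat n * w)%Z.
  have Hs' : (Z.of_nat n * Z.of_nat n - 1 = Z.of_nat g * Z.of_nat s)%Z by lia.
  have Ht' : (Z.of_nat b - Z.of_nat n = Z.of_nat g * Z.of_nat t)%Z by lia.
  have E1' : (Z.of_nat n * Z.of_nat y + Z.of_nat a = Z.of_nat x + Z.of_nat b * Z.of_nat e)%Z by lia.
  have E2' : (Z.of_nat n * Z.of_nat x + Z.of_nat e' = Z.of_nat y + Z.of_nat b * Z.of_nat a')%Z by lia.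
  clear -Hs' Ht' E1' E2' Hw.
  set N := Z.of_nat n in Hs' Ht' E1' E2' Hw *.
  set B := Z.of_nat b in Ht' E1' E2' *.
  set G := Z.of_nat g in Hs' Ht' Hw *.
  have -> : (G * (Z.of_nat s * (Z.of_nat y - Z.of_nat e) - Z.of_nat t * (Z.of_nat a' + N * Z.of_nat e) + N * w)
     = (G * Z.of_nat s) * (Z.of_nat y - Z.of_nat e) - (G * Z.of_nat t) * (Z.of_nat a' + N * Z.of_nat e) + N * (G * w))%Z by ring.
  rewrite -Hs' -Ht' -Hw.
  have X : (N * (N * Z.of_nat y + Z.of_nat a) = N * (Z.of_nat x + B * Z.of_nat e))%Z by rewrite E1'.
  nia.
move=> j Hj.
have [w Hw] := key j (leqW Hj).
have -> : k - j + 1 = k.+1 - j by rewrite addn1 subSn.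
have h1 := Hc j (leqW Hj).
have h2 := Hc (k.+1 - j) (leq_subr _ _).
apply/eqP; rewrite -(eqn_add2r 0).
have : (w = 0)%Z.
  case: (Z.lt_total w 0) => [hw|[//|hw]]; nia.
move=> w0; rewrite w0 in Hw; lia.
Qed.

Lemma symB n b k (d c : nat -> nat) m :
  (forall j, j <= k -> n * d (k-j) + c j = d j + b * c j.+1) ->
  (forall j, j <= k.+1 -> c j < n) -> b = n.+1 * m ->
  forall j, j <= k -> c j = c (k - j).
Proof.
move=> H Hc Hb j Hj.
have E1 := H j Hj.
have E2 := H (k - j) (leq_subr _ _).
rewrite subKn // in E2.
have h1 := Hc j (leqW Hj).
have h2 := Hc (k - j) (leqW (leq_subr _ _)).
move: E1 E2 h1 h2; rewrite Hb.
set y := d (k - j); set x := d j; set a := c j; set e := c j.+1;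
  set e' := c (k - j); set a' := c (k - j).+1 => E1 E2 h1 h2.
have W : (Z.of_nat a - Z.of_nat e' = (Z.of_nat n + 1) * ((Z.of_nat x - Z.of_nat y) + Z.of_nat m * (Z.of_nat e - Z.of_nat a')))%Z by nia.
set w := ((Z.of_nat x - Z.of_nat y) + Z.of_nat m * (Z.of_nat e - Z.of_nat a'))%Z in W.
have : (w = 0)%Z.
  case: (Z.lt_total w 0) => [hw|[//|hw]]; nia.
move=> w0; rewrite w0 in W; lia.
Qed.

Lemma sum_digits b m (f : nat -> nat) : 1 < b -> (forall i, i < m -> f i < b) ->
  (\sum_(i < m) f i * b ^ i < b ^ m) /\
  (forall j, j < m -> (\sum_(i < m) f i * b ^ i) %/ b ^ j %% b = f j).
Proof.
move=> Hb; elim: m f => [|m IH] f Hf.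
  by rewrite big_ord0; split...
have Hg : forall i, i < m -> f i.+1 < b by move=> i Hi; apply: Hf.
have [IH1 IH2] := IH (fun i => f i.+1) Hg.
rewrite big_ord_recl.
have -> : \sum_(i < m) f (lift ord0 i) * b ^ (lift ord0 i) = (\sum_(i < m) f i.+1 * b ^ i) * b.
  rewrite big_distrl; apply: eq_bigr => i _; rewrite lift0.
  by rewrite expnSr mulnA.
have -> : f ord0 * b ^ ord0 = f 0 by rewrite /= expn0 muln1.
set X := \sum_(i < m) f i.+1 * b ^ i in IH1 IH2 *.
have f0 := Hf 0 (ltn0Sn _).
split.
  rewrite expnS; nia.
case => [|j] Hj.
  by rewrite expn0 divn1 addnC modnMDl modn_small.
rewrite expnS mulnC divnMA addnC [b * X]mulnC divnMDl ?(ltnW Hb) // (divn_small f0) addn0.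
exact: IH2.
Qed.

Lemma mod_step r b j : 0 < b -> r %% b ^ j.+1 = r %% b ^ j + (r %/ b ^ j %% b) * b ^ j.
Proof.
move=> Hb.
have Hbj : 0 < b ^ j by rewrite expn_gt0 Hb.
set q := r %/ b ^ j.
have e1 := divn_eq r (b ^ j).
have e2 := divn_eq q b.
have E : r = q %/ b * b ^ j.+1 + (q %% b * b ^ j + r %% b ^ j).
  have e3 := congr1 (muln^~ (b ^ j)) e2.
  move: e1 e3; rewrite -/q expnS /= => e1 e3.
  by rewrite {1}e1 e3 mulnDl mulnA addnA.
rewrite {1}E.
rewrite modnMDl modn_small; first by rewrite addnC.
have h1 := ltn_pmod q Hb.
have h2 := ltn_pmod r Hbj.
rewrite expnS; nia.
Qed.

Lemma carry_facts n b p : 1 < n < b -> palintiple n b p ->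
  [/\ (forall j, j <= topk b p -> n * nth 0 (digits b p) (topk b p - j) + carry n b p j
          = nth 0 (digits b p) j + b * carry n b p j.+1),
      (forall j, j <= (topk b p).+1 -> carry n b p j < n),
      carry n b p (topk b p).+1 = 0,
      0 < nth 0 (digits b p) 0 & 0 < topk b p].
Proof.
case/andP=> Hn Hnb.
have Hb : 1 < b by apply: ltn_trans Hnb.
have Hb0 : 0 < b by apply: ltnW.
rewrite /palintiple /= => -[Hp Htop H0 Hrev Heq].
set L := trunc_log b p.
have HsL : size (digits b p) = L.+1 by rewrite size_mkseq.
have HtL : topk b p = L by rewrite /topk HsL.
rewrite HtL.
have Hd : forall j, j < L.+1 -> nth 0 (digits b p) j = p %/ b ^ j %% b.
  by move=> j Hj; rewrite nth_mkseq.
have HdB : forall j, nth 0 (digits b p) j < b.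
  move=> j; case: (ltnP j L.+1) => Hj; first by rewrite Hd // ltn_pmod.
  by rewrite nth_default ?HsL.
have HpL : p < b ^ L.+1 by apply: trunc_log_ltn.
set ds := digits b p in Hrev Heq Hd HdB HsL H0 Htop *.
set f := fun i => nth 0 (rev ds) i.
have Hf : forall i, i < L.+1 -> f i = nth 0 ds (L - i).
  by move=> i Hi; rewrite /f nth_rev HsL.
have HfB : forall i, i < L.+1 -> f i < b by move=> i Hi; rewrite Hf.
have [Hr1 Hr2] := @sum_digits b L.+1 f Hb HfB.
set r := \sum_(i < L.+1) f i * b ^ i in Hr1 Hr2.
have Hrdef : digval b (rev ds) = r by rewrite /digval size_rev HsL.
rewrite Hrdef in Heq.
set c := carry n b p.
have cS : forall j, c j.+1 = (n * nth 0 ds (L - j) + c j) %/ b by move=> j; rewrite /c /= HtL.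
have modfact : forall j, j <= L -> n * (r %% b ^ j) = p %% b ^ j + c j * b ^ j ->
    (n * nth 0 ds (L - j) + c j) %% b = nth 0 ds j.
  move=> j Hj IH.
  set t := n * nth 0 ds (L - j) + c j.
  have Hbj : 0 < b ^ j by rewrite expn_gt0 Hb0.
  have e1 : n * (r %% b ^ j.+1) = t %/ b * b ^ j.+1 + (p %% b ^ j + t %% b * b ^ j).
    rewrite mod_step // mulnDr IH Hr2 // Hf //.
    have e2 := divn_eq t b.
    have e3 := congr1 (muln^~ (b ^ j)) e2.
    rewrite /= in e3.
    rewrite expnS.
    have tdef : t = n * nth 0 ds (L - j) + c j by [].
    clearbody t.
    move: (t %/ b) (t %% b) (p %% b ^ j) (b ^ j) (nth 0 ds (L - j)) e3 tdef => q m P X D e3 tdef.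
    subst t; clear -e3; nia.
  have e4 : p %% b ^ j.+1 = p %% b ^ j + t %% b * b ^ j.
    have := congr1 (modn^~ (b ^ j.+1)) e1.
    rewrite /= modnMmr -Heq modnMDl => ->.
    apply: modn_small.
    have h1 := ltn_pmod t Hb0.
    have h2 := ltn_pmod p Hbj.
    rewrite expnS; move: (t %% b) (p %% b ^ j) (b ^ j) h1 h2 Hbj => m P X h1 h2 hX; clear -h1 h2 hX; nia.
  rewrite mod_step // -Hd // in e4.
  apply/eqP; rewrite -(eqn_pmul2r Hbj) -(eqn_add2l (p %% b ^ j)).
  by rewrite -e4.
have inv : forall j, j <= L.+1 -> n * (r %% b ^ j) = p %% b ^ j + c j * b ^ j /\ c j < n.
  elim => [|j IH] Hj.
    split; first by rewrite expn0 !modn1 muln0.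
    by rewrite /c /=; apply: ltnW.
  have Hj' : j <= L by [].
  have [IH1 IH2] := IH (ltnW Hj).
  have mf := modfact j Hj' IH1.
  set t := n * nth 0 ds (L - j) + c j in mf.
  have dB := HdB (L - j).
  split.
    rewrite mod_step // (mod_step p) // -Hd // -mf Hr2 // Hf // cS -/t.
    have e2 := divn_eq t b.
    have e3 := congr1 (muln^~ (b ^ j)) e2.
    rewrite /= in e3.
    rewrite expnS mulnDr IH1.
    have tdef : t = n * nth 0 ds (L - j) + c j by [].
    clearbody t.
    move: (t %/ b) (t %% b) (p %% b ^ j) (b ^ j) (nth 0 ds (L - j)) e3 tdef => q m P X D e3 tdef.
    subst t; clear -e3; nia.
  rewrite cS -/t ltn_divLR //.
  rewrite /t; move: (nth 0 ds (L - j)) (c j) dB IH2 => D C dB IH2; clear -dB IH2; nia.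
split.
- move=> j Hj.
  have mf := modfact j Hj (inv j (leqW Hj)).1.
  have e2 := divn_eq (n * nth 0 ds (L - j) + c j) b.
  rewrite mf in e2; rewrite {1}e2.
  by rewrite addnC mulnC.
- by move=> j Hj; rewrite -/c; have [] := inv j Hj.
- rewrite -cS; have [e _] := inv L.+1 (leqnn _).
  rewrite !modn_small // -Heq in e.
  have : 0 < b ^ L.+1 by rewrite expn_gt0 Hb0.
  nia.
- by rewrite lt0n.
- rewrite lt0n; apply/negP => /eqP L0.
  have : size ds = 1 by rewrite HsL L0.
  move: Hrev; case: (ds) => [|x [|y s]] //=.
  by rewrite eqxx.
Qed.

Lemma sym_div n b p : 2 < b -> 1 < n < b -> palintiple n b p -> symmetric_pal n b p ->
  (forall j, j <= topk b p -> carry n b p j = 0 %[mod n.-1]) ->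
  exists m, b = n.+1 * m.
Proof.
move=> Hb Hnn Pp Sp Hm.
have [E Hc ck d0 k0] := carry_facts n b p Hnn Pp.
case/andP: Hnn => Hn Hnb.
set k := topk b p in E Hc ck k0 Sp Hm.
have Ck := Sp k (leqnn _).
have c0 : carry n b p 0 = 0 by [].
rewrite subnn c0 in Ck.
have E0 := E 0 (leq0n _).
have Ek := E k (leqnn _).
rewrite subn0 c0 addn0 in E0; rewrite subnn Ck ck muln0 !addn0 in Ek.
have M1 := Hm 1 k0.
have c1 := Hc 1 (leqW k0).
exists (nth 0 (digits b p) 0).
move: E0 Ek M1 c1 d0.
move: (nth 0 (digits b p) k) (nth 0 (digits b p) 0) (carry n b p 1) => y x a.
move=> E0 Ek M1 c1 d0.
clear -E0 Ek M1 c1 d0 Hn Hnb.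
have a0 : 0 < a by nia.
have an : a = n.-1.
  move: M1; rewrite mod0n => /eqP; rewrite -/(dvdn _ _) => /dvdnP [w hw].
  rewrite -subn1 in hw *.
  case: w hw => [|[|w]] hw; nia.
subst a; rewrite -subn1 in E0.
have h : (n - 1) * (n.+1 * x) = (n - 1) * b.
  rewrite -Ek in E0; nia.
apply/eqP; rewrite -(eqn_pmul2l (_ : 0 < n - 1)); last by lia.
by rewrite h.
Qed.

Lemma sh_g n b p : 1 < n < b -> palintiple n b p -> shifted_symmetric_pal n b p ->
  exists g s t, [/\ n * n - 1 = g * s, b - n = g * t & n <= g].
Proof.
move=> Hnn Pp Sp.
have [E Hc ck d0 k0] := carry_facts n b p Hnn Pp.
case/andP: Hnn => Hn Hnb.
set k := topk b p in E Hc ck k0 Sp.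
have Ck := Sp k (leqnn _).
have c0 : carry n b p 0 = 0 by [].
rewrite subnn add0n in Ck.
have E0 := E 0 (leq0n _).
have Ek := E k (leqnn _).
rewrite subn0 c0 addn0 in E0; rewrite subnn Ck ck muln0 !addn0 in Ek.
have c1 := Hc 1 (leqW k0).
move: E0 Ek c1 d0.
move: (nth 0 (digits b p) k) (nth 0 (digits b p) 0) (carry n b p 1) => y x a.
move=> E0 Ek c1 d0.
clear -E0 Ek c1 d0 Hn Hnb.
have key : (n * n - 1) * x = (b - n) * a.
  rewrite -Ek in E0; nia.
set A := n * n - 1 in key *; set B := b - n in key *.
have A0 : 0 < A by rewrite /A; nia.
have a0 : 0 < a.
  rewrite lt0n; apply/negP => /eqP a0; rewrite a0 muln0 in key.
  move/eqP: key; rewrite muln_eq0 => /orP [] /eqP; lia.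
set g := gcdn A B.
have dA : A %| g * a.
  rewrite /g muln_gcdl dvdn_gcd dvdn_mulr //=.
  by apply/dvdnP; exists x; rewrite -key mulnC.
have ga : 0 < g * a.
  rewrite muln_gt0 a0 andbT /g gcdn_gt0 A0 //.
have le := dvdn_leq ga dA.
exists g, (A %/ g), (B %/ g).
split.
- by rewrite mulnC divnK // dvdn_gcdl.
- by rewrite mulnC divnK // dvdn_gcdr.
- move: le; rewrite /A; clearbody g; nia.
Qed.

Theorem corollary3 :
  (forall b n p, 2 < b -> 1 < n < b -> palintiple n b p -> symmetric_pal n b p ->
     forall j, j <= topk b p -> carry n b p j = 0 %[mod n.-1]) ->
  forall b n p q, 2 < b -> 1 < n < b -> palintiple n b p -> palintiple n b q ->
    [\/ symmetric_pal n b p /\ symmetric_pal n b q,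
        shifted_symmetric_pal n b p /\ shifted_symmetric_pal n b q
      | asymmetric_pal n b p /\ asymmetric_pal n b q].
Proof.
move=> Hyp b n p q Hb Hnn Pp Pq.
have Hn1 : 1 <= n by case/andP: Hnn => h _; apply: ltnW.
have Hnb : n <= b by case/andP: Hnn => _ h; apply: ltnW.
have toSym : forall x y, palintiple n b x -> palintiple n b y ->
    symmetric_pal n b x -> symmetric_pal n b y.
  move=> x y Px Py Sx.
  have [m Hm] := sym_div n b x Hb Hnn Px Sx (Hyp b n x Hb Hnn Px Sx).
  have [E Hc _ _ _] := carry_facts n b y Hnn Py.
  exact: (symB n b (topk b y) (fun i => nth 0 (digits b y) i) (carry n b y) m E Hc Hm).
have toSh : forall x y, palintiple n b x -> palintiple n b y ->
    shifted_symmetric_pal n b x -> shifted_symmetric_pal n b y.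
  move=> x y Px Py Sx.
  have [g [s [t [Hs Ht Hg]]]] := sh_g n b x Hnn Px Sx.
  have [E Hc ck _ _] := carry_facts n b y Hnn Py.
  exact: (shiftA n b (topk b y) (fun i => nth 0 (digits b y) i) (carry n b y) g s t
            E Hc (erefl _) ck Hs Ht Hnb Hn1 Hg).
case: (classic (symmetric_pal n b p)) => Sp.
  by apply: Or31; split => //; apply: (toSym p).
case: (classic (symmetric_pal n b q)) => Sq.
  by exfalso; apply: Sp; apply: (toSym q).
case: (classic (shifted_symmetric_pal n b p)) => Hp.
  by apply: Or32; split => //; apply: (toSh p).
case: (classic (shifted_symmetric_pal n b q)) => Hq.
  by exfalso; apply: Hp; apply: (toSh q).
by apply: Or33.
Qed.
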